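(* Let $\mathcal{C}$ be a CD-category equipped with a normalisation structure $\mathrm{nrm}$ and with cancellative comparators $\nabla$. (i) If $\omega\colon I\to X$ is a state with full support, then $\mathrm{nrm}\big(\nabla_X\circ(\omega\otimes \mathrm{id}_X)\big)=\mathrm{id}_X$ as maps $X\to X$. (ii) More generally, if $c\colon X\to Y$ is a channel with full support, then $\mathrm{nrm}\big(\nabla_Y\circ(c\otimes \mathrm{id}_Y)\big)=\,!_X\otimes \mathrm{id}_Y$ as maps $X\otimes Y\to Y$.
   Context: A CD-category is a symmetric monoidal category (unit $I$) in which every object $X$ carries a copy map $\Delta_X\colon X\to X\otimes X$ and a discard map $!_X\colon X\to I$ forming a commutative comonoid, compatibly with $\otimes$. A map $f$ is a channel if $!\circ f=\,!$; a state is a map $I\to X$. The domain of $f\colon X\to Y$ is $\mathrm{dom}(f)=\,!_Y\circ f$; $g\colon X\to Y$ is a normalisation of $f$ if $f=(\mathrm{dom}(f)\otimes g)\circ\Delta_X$; $f$ is normalised if it is a normalisation of itself. A normalisation structure assigns to every $f\colon X\to Y$ a normalised map $\mathrm{nrm}(f)\colon X\to Y$ that is a normalisation of $f$, such that: $\mathrm{nrm}(f\otimes g)=\mathrm{nrm}(f)\otimes\mathrm{nrm}(g)$; $\mathrm{nrm}(h\circ f)=h\circ\mathrm{nrm}(f)$ for every channel $h$; discarders and copiers on inputs can be pulled out, i.e. $\mathrm{nrm}(f\circ(\mathrm{id}\otimes !))=\mathrm{nrm}(f)\circ(\mathrm{id}\otimes !)$ and $\mathrm{nrm}(f\circ\Delta)=\mathrm{nrm}(f)\circ\Delta$;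 and $\mathrm{nrm}(f)=f$ whenever $f$ is normalised. A comparator structure assigns to each $X$ a map $\nabla_X\colon X\otimes X\to X$ that is commutative, associative, compatible with $\otimes$, and satisfies the Frobenius/spider equations $\nabla\circ\Delta=\mathrm{id}$ and $(\nabla\otimes\mathrm{id})\circ(\mathrm{id}\otimes\Delta)=\Delta\circ\nabla=(\mathrm{id}\otimes\nabla)\circ(\Delta\otimes\mathrm{id})$. The cap is $\cap_X=\,!_X\circ\nabla_X\colon X\otimes X\to I$. Comparators are cancellative if for $f,g\colon A\to Y\otimes Z$, $(\cap_Y\otimes\mathrm{id}_Z)\circ(\mathrm{id}_Y\otimes f)=(\cap_Y\otimes\mathrm{id}_Z)\circ(\mathrm{id}_Y\otimes g)$ implies $f=g$. A map $f\colon X\to Y$ has full support if $\mathrm{nrm}\big(\cap_Y\circ(f\otimes\mathrm{id}_Y)\big)=\,!_{X\otimes Y}$ (a state is the case $X=I$). In the Kleisli category of the finite subdistribution monad (maps $X\to\mathcal{D}_{\le1}(Y)$, $\mathrm{nrm}$ = pointwise rescaling to total mass $1$, with the zero subdistribution sent to itself, $\nabla(x,x')=1|x\rangle$ if $x=x'$ and $0$ otherwise), full support of $f$ means $f(x)(y)>0$ for all $x,y$. *)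

(* Defs.v *)
(* The underlying symmetric monoidal category is NOT
   assumed strict: associators, unitors and the symmetry are explicit. *)

Set Implicit Arguments.
Unset Strict Implicit.

Record CDData := {
  ob : Type;
  hom : ob -> ob -> Type;
  idm : forall A, hom A A;
  comp : forall A B C, hom B C -> hom A B -> hom A C;
  tob : ob -> ob -> ob;
  unit : ob;
  tens : forall A B C D, hom A B -> hom C D -> hom (tob A C) (tob B D);
  assoc : forall A B C, hom (tob (tob A B) C) (tob A (tob B C));
  assoc_inv : forall A B C, hom (tob A (tob B C)) (tob (tob A B) C);
  lu : forall A, hom (tob unit A) A;
  lu_inv : forall A, hom A (tob unit A);
  ru : forall A, hom (tob A unit) A;
  ru_inv : forall A, hom A (tob A unit);
  braid : forall A B, hom (tob A B) (tob B A);
  copy : forall A, hom A (tob A A);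
  disc : forall A, hom A unit
}.

Arguments hom {c} _ _.
Arguments idm {c} A.
Arguments comp {c A B C} _ _.
Arguments tob {c} _ _.
Arguments unit {c}.
Arguments tens {c A B C D} _ _.
Arguments assoc {c} A B C.
Arguments assoc_inv {c} A B C.
Arguments lu {c} A.
Arguments lu_inv {c} A.
Arguments ru {c} A.
Arguments ru_inv {c} A.
Arguments braid {c} A B.
Arguments copy {c} A.
Arguments disc {c} A.

Declare Scope cd_scope.
Delimit Scope cd_scope with cd.
Open Scope cd_scope.
Notation "g ∘ f" := (comp g f) (at level 40, left associativity) : cd_scope.
Notation "f ⊗ g" := (tens f g) (at level 35, no associativity) : cd_scope.
Notation "A ⊠ B" := (tob A B) (at level 35, no associativity) : cd_scope.

Section CDLaws.
Variable C : CDData.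

Definition mid4 (A B D E : ob C) : hom ((A ⊠ B) ⊠ (D ⊠ E)) ((A ⊠ D) ⊠ (B ⊠ E)) :=
  assoc_inv A D (B ⊠ E)
  ∘ (idm A ⊗ (assoc D B E ∘ (braid B D ⊗ idm E) ∘ assoc_inv B D E))
  ∘ assoc A B (D ⊠ E).

Record is_CDCat : Prop := {
  comp_idl : forall (A B : ob C) (f : hom A B), idm B ∘ f = f;
  comp_idr : forall (A B : ob C) (f : hom A B), f ∘ idm A = f;
  comp_assoc : forall (A B D E : ob C) (f : hom A B) (g : hom B D) (h : hom D E),
      h ∘ (g ∘ f) = (h ∘ g) ∘ f;
  tens_id : forall A B : ob C, idm A ⊗ idm B = idm (A ⊠ B);
  tens_comp : forall (A1 A2 A3 B1 B2 B3 : ob C) (f : hom A1 A2) (g : hom A2 A3)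
      (f' : hom B1 B2) (g' : hom B2 B3),
      (g ∘ f) ⊗ (g' ∘ f') = (g ⊗ g') ∘ (f ⊗ f');
  assoc_iso1 : forall A B D : ob C, assoc_inv A B D ∘ assoc A B D = idm _;
  assoc_iso2 : forall A B D : ob C, assoc A B D ∘ assoc_inv A B D = idm _;
  lu_iso1 : forall A : ob C, lu_inv A ∘ lu A = idm _;
  lu_iso2 : forall A : ob C, lu A ∘ lu_inv A = idm _;
  ru_iso1 : forall A : ob C, ru_inv A ∘ ru A = idm _;
  ru_iso2 : forall A : ob C, ru A ∘ ru_inv A = idm _;
  braid_sym : forall A B : ob C, braid B A ∘ braid A B = idm _;
  assoc_nat : forall (A A' B B' D D' : ob C) (f : hom A A') (g : hom B B') (h : hom D D'),
      assoc A' B' D' ∘ ((f ⊗ g) ⊗ h) = (f ⊗ (g ⊗ h)) ∘ assoc A B D;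
  lu_nat : forall (A A' : ob C) (f : hom A A'), lu A' ∘ (idm unit ⊗ f) = f ∘ lu A;
  ru_nat : forall (A A' : ob C) (f : hom A A'), ru A' ∘ (f ⊗ idm unit) = f ∘ ru A;
  braid_nat : forall (A A' B B' : ob C) (f : hom A A') (g : hom B B'),
      braid A' B' ∘ (f ⊗ g) = (g ⊗ f) ∘ braid A B;
  pentagon : forall A B D E : ob C,
      (idm A ⊗ assoc B D E) ∘ assoc A (B ⊠ D) E ∘ (assoc A B D ⊗ idm E)
      = assoc A B (D ⊠ E) ∘ assoc (A ⊠ B) D E;
  triangle : forall A B : ob C,
      (idm A ⊗ lu B) ∘ assoc A unit B = ru A ⊗ idm B;
  hexagon : forall A B D : ob C,
      assoc B D A ∘ braid A (B ⊠ D) ∘ assoc A B D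
      = (idm B ⊗ braid A D) ∘ assoc B A D ∘ (braid A B ⊗ idm D);
  copy_coassoc : forall A : ob C,
      assoc A A A ∘ (copy A ⊗ idm A) ∘ copy A = (idm A ⊗ copy A) ∘ copy A;
  copy_counitl : forall A : ob C, lu A ∘ (disc A ⊗ idm A) ∘ copy A = idm A;
  copy_counitr : forall A : ob C, ru A ∘ (idm A ⊗ disc A) ∘ copy A = idm A;
  copy_cocomm : forall A : ob C, braid A A ∘ copy A = copy A;
  copy_tens : forall A B : ob C,
      copy (A ⊠ B) = mid4 A A B B ∘ (copy A ⊗ copy B);
  disc_tens : forall A B : ob C, disc (A ⊠ B) = lu unit ∘ (disc A ⊗ disc B);
  copy_unit : copy (@unit C) = lu_inv unit;
  disc_unit : disc (@unit C) = idm unit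
}.
End CDLaws.

Record CDCat := {
  cd_data :> CDData;
  cd_laws : is_CDCat cd_data
}.

Section Notions.
Variable C : CDCat.

Definition channel (X Y : ob C) (f : hom X Y) : Prop := disc Y ∘ f = disc X.

Definition dom (X Y : ob C) (f : hom X Y) : hom X unit := disc Y ∘ f.

Definition is_normalisation (X Y : ob C) (f g : hom X Y) : Prop :=
  f = lu Y ∘ (dom f ⊗ g) ∘ copy X.

Definition normalised (X Y : ob C) (f : hom X Y) : Prop := is_normalisation f f.

Record NrmStructure := {
  nrm : forall X Y : ob C, hom X Y -> hom X Y;
  nrm_normalised : forall X Y (f : hom X Y), normalised (nrm f);
  nrm_is_normalisation : forall X Y (f : hom X Y), is_normalisation f (nrm f);
  nrm_tens : forall X Y X' Y' (f : hom X Y) (g : hom X' Y'),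
      nrm (f ⊗ g) = nrm f ⊗ nrm g;
  nrm_channel : forall X Y Z (f : hom X Y) (h : hom Y Z),
      channel h -> nrm (h ∘ f) = h ∘ nrm f;
  nrm_disc_input : forall X Z Y (f : hom X Y),
      nrm (f ∘ ru X ∘ (idm X ⊗ disc Z)) = nrm f ∘ ru X ∘ (idm X ⊗ disc Z);
  nrm_copy_input : forall X Y (f : hom (X ⊠ X) Y),
      nrm (f ∘ copy X) = nrm f ∘ copy X;
  nrm_of_normalised : forall X Y (f : hom X Y), normalised f -> nrm f = f
}.

Record ComparatorStructure := {
  nabla : forall X : ob C, hom (X ⊠ X) X;
  nabla_comm : forall X, nabla X ∘ braid X X = nabla X;
  nabla_assoc : forall X,
      nabla X ∘ (nabla X ⊗ idm X) = nabla X ∘ (idm X ⊗ nabla X) ∘ assoc X X X;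
  nabla_tens : forall X Y,
      nabla (X ⊠ Y) = (nabla X ⊗ nabla Y) ∘ mid4 X Y X Y;
  nabla_copy : forall X, nabla X ∘ copy X = idm X;
  frobenius_l : forall X,
      (nabla X ⊗ idm X) ∘ assoc_inv X X X ∘ (idm X ⊗ copy X) = copy X ∘ nabla X;
  frobenius_r : forall X,
      copy X ∘ nabla X = (idm X ⊗ nabla X) ∘ assoc X X X ∘ (copy X ⊗ idm X)
}.

Definition cap (K : ComparatorStructure) (X : ob C) : hom (X ⊠ X) unit :=
  disc X ∘ nabla K X.

(* (∩_Y ⊗ id_Z) ∘ (id_Y ⊗ f) : Y⊗A -> Z, with the structural isos made explicit *)
Definition cap_apply (K : ComparatorStructure) (A Y Z : ob C) (f : hom A (Y ⊠ Z))
  : hom (Y ⊠ A) Z :=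
  lu Z ∘ (cap K Y ⊗ idm Z) ∘ assoc_inv Y Y Z ∘ (idm Y ⊗ f).

Definition cancellative (K : ComparatorStructure) : Prop :=
  forall (A Y Z : ob C) (f g : hom A (Y ⊠ Z)),
    cap_apply K f = cap_apply K g -> f = g.

(* full support:  nrm (∩_Y ∘ (f ⊗ id_Y)) = !_{X⊗Y} ; states are the case X = I *)
Definition full_support (N : NrmStructure) (K : ComparatorStructure)
  (X Y : ob C) (f : hom X Y) : Prop :=
  nrm N (cap K Y ∘ (f ⊗ idm Y)) = disc (X ⊠ Y).

End Notions.

Arguments nrm {C} n {X Y} _.
Arguments nabla {C} c X.

(* Main.v *)
Require Import Defs.
Set Implicit Arguments.
Unset Strict Implicit.
Section S.
Variable C : CDCat.
Let L := cd_laws C.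

Lemma ca (A B D E : ob C) (f : hom A B) (g : hom B D) (h : hom D E) : h ∘ (g ∘ f) = (h ∘ g) ∘ f.
Proof. apply (comp_assoc L). Qed.
Lemma cl (A B : ob C) (f : hom A B) : idm B ∘ f = f. Proof. apply (comp_idl L). Qed.
Lemma cr (A B : ob C) (f : hom A B) : f ∘ idm A = f. Proof. apply (comp_idr L). Qed.
Lemma tc (A1 A2 A3 B1 B2 B3 : ob C) (f : hom A1 A2) (g : hom A2 A3)
      (f' : hom B1 B2) (g' : hom B2 B3) : (g ∘ f) ⊗ (g' ∘ f') = (g ⊗ g') ∘ (f ⊗ f').
Proof. apply (tens_comp L). Qed.
Lemma tid (A B : ob C) : idm A ⊗ idm B = idm (A ⊠ B). Proof. apply (tens_id L). Qed.

Lemma tens_l (A B D E : ob C) (f : hom A B) (g : hom D E) : f ⊗ g = (f ⊗ idm E) ∘ (idm A ⊗ g).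
Proof. rewrite <- tc, cl, cr. reflexivity. Qed.
Lemma tens_r (A B D E : ob C) (f : hom A B) (g : hom D E) : f ⊗ g = (idm B ⊗ g) ∘ (f ⊗ idm D).
Proof. rewrite <- tc, cl, cr. reflexivity. Qed.
Lemma itc (A B D E : ob C) (g : hom D E) (h : hom B D) : idm A ⊗ (g ∘ h) = (idm A ⊗ g) ∘ (idm A ⊗ h).
Proof. rewrite <- tc, cl. reflexivity. Qed.
Lemma tci (A B D E : ob C) (g : hom D E) (h : hom B D) : (g ∘ h) ⊗ idm A = (g ⊗ idm A) ∘ (h ⊗ idm A).
Proof. rewrite <- tc, cl. reflexivity. Qed.

Lemma rcancel (A B D : ob C) (f g : hom B D) (u : hom A B) (v : hom B A) :
  u ∘ v = idm B -> f ∘ u = g ∘ u -> f = g.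
Proof. intros H1 H2. rewrite <- (cr f), <- (cr g), <- H1, !ca, H2. reflexivity. Qed.
Lemma lcancel (A B D : ob C) (f g : hom D A) (u : hom A B) (v : hom B A) :
  v ∘ u = idm A -> u ∘ f = u ∘ g -> f = g.
Proof. intros H1 H2. rewrite <- (cl f), <- (cl g), <- H1, <- !ca, H2. reflexivity. Qed.

Lemma assoc_inv_nat (A A' B B' D D' : ob C) (f : hom A A') (g : hom B B') (h : hom D D') :
  assoc_inv A' B' D' ∘ (f ⊗ (g ⊗ h)) = ((f ⊗ g) ⊗ h) ∘ assoc_inv A B D.
Proof.
  apply (lcancel (u := assoc A' B' D') (v := assoc_inv A' B' D')). apply (assoc_iso1 L).
  rewrite !ca, (assoc_iso2 L), cl, (assoc_nat L), <- ca, (assoc_iso2 L), cr. reflexivity.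
Qed.

Lemma lu_faithful (A B : ob C) (f g : hom A B) : idm unit ⊗ f = idm unit ⊗ g -> f = g.
Proof.
  intro H. apply (rcancel (u := lu A) (v := lu_inv A)). apply (lu_iso2 L).
  rewrite <- !(lu_nat L), H. reflexivity.
Qed.
Lemma ru_faithful (A B : ob C) (f g : hom A B) : f ⊗ idm unit = g ⊗ idm unit -> f = g.
Proof.
  intro H. apply (rcancel (u := ru A) (v := ru_inv A)). apply (ru_iso2 L).
  rewrite <- !(ru_nat L), H. reflexivity.
Qed.

(* Kelly *)
Lemma K1 (A B : ob C) : lu (A ⊠ B) ∘ assoc unit A B = lu A ⊗ idm B.
Proof.
  apply lu_faithful.
  apply (rcancel (u := assoc unit (unit ⊠ A) B ∘ (assoc unit unit A ⊗ idm B)) (v := (assoc_inv unit unit A ⊗ idm B) ∘ assoc_inv unit (unit ⊠ A) B)).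
  { rewrite ca, <- (ca (assoc_inv unit unit A ⊗ idm B)), <- tc, (assoc_iso2 L), cl, tid, cr, (assoc_iso2 L). reflexivity. }
  rewrite itc, <- ca, (ca (assoc unit unit A ⊗ idm B)).
  rewrite (pentagon L), ca, (triangle L), <- tid, <- (assoc_nat L).
  rewrite <- (triangle L), tci, ca, (assoc_nat L), ca. reflexivity.
Qed.
End S.
Section S2.
Variable C : CDCat.
Let L := cd_laws C.
Lemma K2a (A : ob C) : lu A ∘ braid A unit = ru A.
Proof.
  assert (H : forall D : ob C, braid A D ∘ (ru A ⊗ idm D) = braid A D ∘ ((lu A ∘ braid A unit) ⊗ idm D)).
  { intro D. pose proof (f_equal (fun k => lu (D ⊠ A) ∘ k) (hexagon L A unit D)) as Hx. simpl in Hx.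
    rewrite !ca, K1, <- (braid_nat L), <- ca, (triangle L) in Hx.
    rewrite (lu_nat L) in Hx.
    rewrite <- (ca (assoc unit A D)), K1, <- ca, <- tci in Hx. exact Hx. }
  apply ru_faithful. apply (lcancel (u := braid A unit) (v := braid unit A)). apply (braid_sym L).
  symmetry; apply H.
Qed.
Lemma K2 (A : ob C) : ru A ∘ braid unit A = lu A.
Proof. rewrite <- K2a, <- ca, (braid_sym L), cr. reflexivity. Qed.
End S2.
Section S3.
Variable C : CDCat.
Let L := cd_laws C.
Lemma mid4_nat2 (A B B' D E : ob C) (g : hom B B') :
  (idm (A ⊠ D) ⊗ (g ⊗ idm E)) ∘ mid4 A B D E = mid4 A B' D E ∘ ((idm A ⊗ g) ⊗ idm (D ⊠ E)).
Proof.
  unfold mid4. rewrite <- (tid A D), !ca, <- assoc_inv_nat.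
  rewrite <- (ca (idm A ⊗ _)), <- itc, !ca.
  rewrite <- (assoc_nat L).
  rewrite <- (ca (braid B D ⊗ idm E)), <- tci, <- (braid_nat L), tci.
  rewrite <- (ca (assoc_inv B D E)), <- (ca (assoc_inv B D E) ((g ⊗ idm D) ⊗ idm E)), <- assoc_inv_nat, (tid D E), !ca.
  rewrite itc, !ca, <- (ca (assoc A B (D ⊠ E))), <- (assoc_nat L), !ca. reflexivity.
Qed.
End S3.
Section S4.
Variable C : CDCat.
Let L := cd_laws C.
Lemma Coh (X Y : ob C) :
  (idm (X ⊠ Y) ⊗ lu Y) ∘ mid4 X unit Y Y ∘ (ru_inv X ⊗ idm (Y ⊠ Y)) = assoc_inv X Y Y.
Proof.
  unfold mid4. rewrite <- (tid X Y), !ca, <- assoc_inv_nat.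
  rewrite <- (ca (idm X ⊗ _)), <- itc, !ca.
  rewrite (triangle L), <- tci, K2, <- K1, <- (ca (assoc_inv unit Y Y)), (assoc_iso2 L), cr.
  rewrite <- (ca (assoc X unit (Y ⊠ Y))), (triangle L), <- ca, <- tc, (ru_iso2 L), cl, tid, cr.
  reflexivity.
Qed.
End S4.
Section S5.
Variable C : CDCat.
Let L := cd_laws C.
Lemma copy_ru (X : ob C) : (idm X ⊗ disc X) ∘ copy X = ru_inv X.
Proof.
  apply (lcancel (u := ru X) (v := ru_inv X)). apply (ru_iso1 L).
  rewrite ca, (copy_counitr L), (ru_iso2 L). reflexivity.
Qed.
Lemma Key (X Y : ob C) (h : hom (X ⊠ Y) unit) :
  lu Y ∘ (h ⊗ idm Y) ∘ assoc_inv X Y Y ∘ (idm X ⊗ copy Y)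
  = lu Y ∘ (h ⊗ (lu Y ∘ (disc X ⊗ idm Y))) ∘ copy (X ⊠ Y).
Proof.
  assert (E1 : h ⊗ (lu Y ∘ (disc X ⊗ idm Y)) = (h ⊗ idm Y) ∘ (idm (X⊠Y) ⊗ lu Y) ∘ (idm (X⊠Y) ⊗ (disc X ⊗ idm Y))).
  { rewrite <- !tc, cl, !cr. reflexivity. }
  rewrite E1, (copy_tens L), !ca, <- (ca (mid4 X X Y Y)), mid4_nat2.
  rewrite !ca, <- (ca (copy X ⊗ copy Y) ((idm X ⊗ disc X) ⊗ idm (Y ⊠ Y))), <- tc, cl, copy_ru, (tens_l (ru_inv X)).
  rewrite <- (Coh X Y), !ca.
  reflexivity.
Qed.
End S5.
Section S6.
Variable C : CDCat.
Let L := cd_laws C.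
Variable K : ComparatorStructure C.
Lemma Frob (X Y : ob C) (c : hom X Y) :
  nabla K Y ∘ (c ⊗ idm Y) = lu Y ∘ ((cap K Y ∘ (c ⊗ idm Y)) ⊗ idm Y) ∘ assoc_inv X Y Y ∘ (idm X ⊗ copy Y).
Proof.
  unfold cap. rewrite !tci, !ca, <- (ca (assoc_inv X Y Y)), <- assoc_inv_nat, tid.
  rewrite !ca, <- (ca (idm X ⊗ copy Y)), <- tens_l, (tens_r c (copy Y)).
  assert (E : nabla K Y ∘ (c ⊗ idm Y) = lu Y ∘ (disc Y ⊗ idm Y) ∘ copy Y ∘ (nabla K Y ∘ (c ⊗ idm Y))).
  { rewrite (copy_counitl L), cl. reflexivity. }
  rewrite E; clear E.
  rewrite !ca, <- (ca (nabla K Y) (copy Y)), <- (frobenius_l K), !ca. reflexivity.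
Qed.
End S6.
Section S7.
Variable C : CDCat.
Let L := cd_laws C.
Variable N : NrmStructure C.
Variable K : ComparatorStructure C.

Lemma nrm_idm (X : ob C) : nrm N (idm X) = idm X.
Proof. apply nrm_of_normalised. unfold normalised, is_normalisation, dom.
  rewrite cr, (copy_counitl L). reflexivity. Qed.

Lemma nrm_chan (X Y : ob C) (h : hom X Y) : channel h -> nrm N h = h.
Proof. intro Hh. transitivity (nrm N (h ∘ idm X)); [rewrite cr; reflexivity|].
  rewrite (nrm_channel N (idm X) Hh), nrm_idm, cr. reflexivity. Qed.

Lemma lu_chan (Y : ob C) : channel (lu Y).
Proof. unfold channel. rewrite (disc_tens L), (disc_unit L), (lu_nat L). reflexivity. Qed.

Lemma g_chan (X Y : ob C) : channel (lu Y ∘ (disc X ⊗ idm Y)).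
Proof. unfold channel. rewrite ca, (lu_chan Y), !(disc_tens L), (disc_unit L), <- ca, <- tc, cl, cr.
  reflexivity. Qed.

Lemma counit_g (A B : ob C) (g : hom A B) : lu B ∘ (disc A ⊗ g) ∘ copy A = g.
Proof. rewrite (tens_r (disc A) g), ca, (lu_nat L), <- !ca, (ca (copy A)), (copy_counitl L), cr.
  reflexivity. Qed.

Lemma gen (X Y : ob C) (c : hom X Y) : full_support N K c ->
  nrm N (nabla K Y ∘ (c ⊗ idm Y)) = lu Y ∘ (disc X ⊗ idm Y).
Proof.
  intro Hfs. unfold full_support in Hfs.
  rewrite Frob, Key, <- ca.
  rewrite (nrm_channel N _ (lu_chan Y)), nrm_copy_input, nrm_tens, Hfs, (nrm_chan (g_chan X Y)).
  rewrite ca; apply counit_g.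
Qed.
End S7.

Theorem proposition4p3 (C : CDCat) (N : NrmStructure C)
    (K : ComparatorStructure C) (Hcanc : cancellative K) :
  (* (i) states with full support *)
  (forall (X : ob C) (omega : hom unit X),
      full_support N K omega ->
      nrm N (nabla K X ∘ (omega ⊗ idm X)) = lu X) /\
  (* (ii) channels with full support *)
  (forall (X Y : ob C) (c : hom X Y),
      channel c -> full_support N K c ->
      nrm N (nabla K Y ∘ (c ⊗ idm Y)) = lu Y ∘ (disc X ⊗ idm Y)).
Proof.
  split.
  - intros X omega H. rewrite (gen H), (disc_unit (cd_laws C)), tid, cr. reflexivity.
  - intros X Y c _ H. apply (gen H).
Qed.
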